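(* Every partial Steiner triple system of order $n$ has a cyclically $\ell$-good sequencing for each positive integer $\ell \leq 0.0908\, n^{1/2}$.
   Context: A partial Steiner triple system of order $n$ is a pair $(X,\mathcal{B})$ where $X$ is an $n$-set of vertices ($n\ge 3$) and $\mathcal{B}$ is a collection of $3$-subsets of $X$ (blocks) such that each $2$-subset of $X$ is contained in at most one block. An independent set is a subset $Y\subseteq X$ containing no block. Let $\mathbb{Z}_n=\{0,\ldots,n-1\}$ be the cyclic group of order $n$. A sequencing is a bijection $\varphi:\mathbb{Z}_n\to X$. A set $S\subseteq X$ is cyclically consecutive if $S=\{\varphi(i),\varphi(i+1),\ldots,\varphi(i+|S|-1)\}$ for some $i\in\mathbb{Z}_n$ (addition in $\mathbb{Z}_n$). For a positive integer $\ell$, a sequencing is cyclically $\ell$-good if every set of $\ell$ cyclically consecutive vertices is an independent set. *)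

(* Defs.v *)
From Stdlib Require Import Reals.
From mathcomp Require Import all_boot.
Set Implicit Arguments. Unset Strict Implicit. Unset Printing Implicit Defensive.

Definition is_PSTS (T : finType) (B : {set {set T}}) : Prop :=
  (forall b, b \in B -> #|b| = 3) /\
  (forall x y : T, x != y -> #|[set b in B | (x \in b) && (y \in b)]| <= 1).

Definition independent (T : finType) (B : {set {set T}}) (Y : {set T}) : Prop :=
  forall b, b \in B -> ~~ (b \subset Y).

(* The set {phi(i), phi(i+1), ..., phi(i+l-1)}, indices taken in Z_n
   (i.e. modulo n; the default value i of insubd is never used since
   (i+k) %% n < n whenever 'I_n is inhabited). *)
Definition cyc_window (n : nat) (T : finType) (phi : 'I_n -> T) (i : 'I_n) (l : nat)
  : {set T} :=
  [set phi (insubd i ((i + k) %% n)) | k : 'I_l].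

Definition cyc_good (n : nat) (T : finType) (B : {set {set T}}) (phi : 'I_n -> T)
  (l : nat) : Prop :=
  forall i : 'I_n, independent B (cyc_window phi i l).

(* Main.v *)
Require Import Defs.
From Stdlib Require Import Reals Lra.
From mathcomp Require Import all_boot.
From mathcomp Require Import zify.
Set Implicit Arguments. Unset Strict Implicit. Unset Printing Implicit Defensive.

Lemma card_bigcup_le (I U : finType) (S : {set I}) (F : I -> {set U}) :
  #|\bigcup_(i in S) F i| <= \sum_(i in S) #|F i|.
Proof.
elim/big_rec2: _ => [|i x y _ IH]; first by rewrite cards0.
by apply: leq_trans (leq_card_setU _ _) _; rewrite leq_add2l.
Qed.

Section LLL.
Variables (F E : finType) (Om : {set F}) (A : E -> {set F}) (conf : E -> E -> bool)
  (Ev : {set E}) (K d : nat).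

Definition GS (S : {set E}) := Om :&: \bigcap_(b in S) ~: A b.

Lemma inGS (S : {set E}) f : (f \in GS S) = (f \in Om) && [forall b in S, f \notin A b].
Proof.
rewrite /GS inE; congr (_ && _); apply/bigcapP/forall_inP => H b /H; by rewrite ?inE.
Qed.

Hypothesis LS : forall a (S : {set E}), a \in Ev -> S \subset Ev -> {in S, forall b, ~~ conf a b} ->
  K * #|A a :&: GS S| <= #|GS S|.
Hypothesis deg : forall a, a \in Ev -> #|[set b in Ev | conf a b]| <= d.
Hypothesis Kd : 4 * d <= K.

Lemma GS_sub (S1 S2 : {set E}) : S1 \subset S2 -> GS S2 \subset GS S1.
Proof.
move=> sub; apply/subsetP => f; rewrite !inGS => /andP[-> /forall_inP H] /=.
by apply/forall_inP => b /(subsetP sub) /H.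
Qed.

Lemma claim (S : {set E}) a : S \subset Ev -> a \in Ev -> a \notin S ->
  K * #|A a :&: GS S| <= 2 * #|GS S|.
Proof.
elim: {S}#|S|.+1 {-2}S (ltnSn #|S|) a => // m IH S leS a sEv aEv aS.
set S1 := [set b in S | conf a b]; set S2 := S :\: S1.
have S2S : S2 \subset S by apply: subsetDl.
have S2Ev : S2 \subset Ev by apply: subset_trans S2S sEv.
have nc : {in S2, forall b, ~~ conf a b}.
  by move=> b; rewrite !inE => /andP[/negP H bS]; apply/negP => cb; apply: H; rewrite bS.
have LS2 := LS aEv S2Ev nc.
have sub2 := GS_sub S2S.
have AS : #|A a :&: GS S| <= #|A a :&: GS S2|.
  by apply: subset_leq_card; apply: setIS.
case: (set_0Vmem S1) => [S10 | [b0 b0S1]].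
  have eS : S2 = S by rewrite /S2 S10 setD0.
  move: LS2; rewrite eS => H; lia.
have ltS2 : #|S2| < #|S|.
  apply: proper_card; apply/properP; split => //; exists b0 => //.
    by move: b0S1; rewrite inE => /andP[].
  by rewrite inE b0S1.
have key : GS S2 \subset GS S :|: \bigcup_(b in S1) (A b :&: GS S2).
  apply/subsetP => f fG; rewrite inE.
  case fS: (f \in GS S) => //=.
  move: fS; rewrite inGS; move: (fG); rewrite inGS => /andP[-> /forall_inP H2] /=.
  move/negbT; rewrite negb_forall_in => /existsP[b /andP[bS /negPn fb]].
  apply/bigcupP; exists b; last by rewrite inE fb.
  rewrite inE bS /=; apply/negPn/negP => nb.
  have : b \in S2 by rewrite !inE bS (negbTE nb).
  by move/H2; rewrite fb.
have c1 := subset_leq_card key.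
have c2 := leq_trans c1 (leq_card_setU _ _).
have c3 := leq_trans c2 (leq_add (leqnn _) (card_bigcup_le _ _)).
have c4 : K * (\sum_(b in S1) #|A b :&: GS S2|) <= \sum_(b in S1) 2 * #|GS S2|.
  rewrite big_distrr /=; apply: leq_sum => b bS1.
  apply: IH => //.
  - by apply: leq_trans ltS2 _; rewrite -ltnS.
  - by apply: (subsetP sEv); move: bS1; rewrite inE => /andP[].
  - by rewrite inE bS1.
rewrite sum_nat_const in c4.
have c5 : #|S1| <= d.
  apply: leq_trans (deg aEv); apply: subset_leq_card; apply/subsetP => b.
  rewrite !inE => /andP[bS cb]; by rewrite (subsetP sEv _ bS) cb.
set g := #|GS S| in c3 *; set g2 := #|GS S2| in c3 c4 LS2 *.
set s := \sum_(b in S1) _ in c3 c4.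
set x := #|A a :&: GS S| in AS *; set x2 := #|A a :&: GS S2| in AS LS2.
have c6 : #|S1| * (2 * g2) <= d * (2 * g2) by apply: leq_mul.
have e1 : K * g2 <= K * g + K * s by rewrite -mulnDr leq_mul2l c3 orbT.
have e2 : 4 * d * g2 <= K * g2 by rewrite leq_mul2r Kd orbT.
have e3 : K * g2 <= 2 * (K * g) by lia.
have e4 : K * (K * x) <= K * g2.
  rewrite leq_mul2l; apply/orP; right; apply: leq_trans LS2.
  by rewrite leq_mul2l AS orbT.
case: K e3 e4 => [|K'] e3 e4 //.
rewrite -(leq_pmul2l (ltn0Sn K')); lia.
Qed.

Lemma GSpos : 0 < #|Om| -> 2 < K -> forall S : {set E}, S \subset Ev -> 0 < #|GS S|.
Proof.
move=> Om0 K2 S.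
elim: {S}#|S|.+1 {-2}S (ltnSn #|S|) => // m IH S leS sEv.
case: (set_0Vmem S) => [-> | [a aS]].
  by rewrite /GS big_set0 setIT.
set S' := S :\ a.
have S'S : S' \subset S by apply: subsetDl.
have lt : #|S'| < #|S| by rewrite /S' (cardsD1 a S) aS.
have S'Ev : S' \subset Ev by apply: subset_trans S'S sEv.
have aEv : a \in Ev by apply: (subsetP sEv).
have aS' : a \notin S' by rewrite !inE eqxx.
have pos := IH S' (leq_trans lt _) S'Ev.
have := claim S'Ev aEv aS'.
have -> : GS S = GS S' :\: A a.
  apply/setP => f; rewrite in_setD !inGS.
  case: (f \in Om); rewrite /= ?andbF // andbC.
  apply/forall_inP/andP => [H | [/forall_inP H1 H2] b bS].
    split; first by apply/forall_inP => b; rewrite !inE => /andP[_ /H].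
    by apply: H.
  by case: (b =P a) => [-> //|/eqP ba]; apply: H1; rewrite !inE ba.
rewrite cardsD setIC.
have := pos (ltac:(by rewrite -ltnS)).
have : #|A a :&: GS S'| <= #|GS S'| by apply: subset_leq_card; apply: subsetIr.
nia.
Qed.

End LLL.
Lemma ext_perm (T : finType) (x0 : T) (xs ts : seq T) :
  uniq xs -> uniq ts -> size xs = size ts ->
  exists s : T -> T, [/\ injective s,
    forall i, i < size xs -> s (nth x0 xs i) = nth x0 ts i &
    forall z, z \notin xs -> s z \notin xs -> s z = z].
Proof.
move=> uxs uts sz.
set U := undup (xs ++ ts).
set e1 := xs ++ [seq z <- U | z \notin xs].
set e2 := ts ++ [seq z <- U | z \notin ts].
have ue1 : uniq e1.
  rewrite cat_uniq uxs filter_uniq ?undup_uniq //= andbT.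
  by apply/hasPn => z; rewrite mem_filter => /andP[].
have ue2 : uniq e2.
  rewrite cat_uniq uts filter_uniq ?undup_uniq //= andbT.
  by apply/hasPn => z; rewrite mem_filter => /andP[].
have me1 : e1 =i U.
  move=> z; rewrite mem_cat mem_filter mem_undup mem_cat.
  by case: (z \in xs); case: (z \in ts).
have me2 : e2 =i U.
  move=> z; rewrite mem_cat mem_filter mem_undup mem_cat.
  by case: (z \in xs); case: (z \in ts).
have se1 : size e1 = size U by apply: perm_size; apply: uniq_perm; rewrite ?undup_uniq.
have se2 : size e2 = size U by apply: perm_size; apply: uniq_perm; rewrite ?undup_uniq.
pose s z := if z \in U then nth x0 e2 (index z e1) else z.
have sU z : z \in U -> s z \in U.
  move=> zU; rewrite /s zU -me2 mem_nth // se2 -se1 index_mem me1 //.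
exists s; split.
- move=> z w; rewrite /s.
  case zU: (z \in U); case wU: (w \in U) => //.
  + move=> /eqP; rewrite nth_uniq //; last 2 first.
      by rewrite se2 -se1 index_mem me1.
      by rewrite se2 -se1 index_mem me1.
    move=> /eqP eq; rewrite -(nth_index x0 (s := e1) (x := z)) ?me1 //.
    by rewrite eq nth_index ?me1.
  + move=> eq; have := sU z; rewrite zU /s zU eq wU => H.
    by have := H isT.
  + move=> eq; have := sU w; rewrite wU /s wU -eq zU => H.
    by have := H isT.
- move=> i lti; rewrite /s.
  have xU : nth x0 xs i \in U by rewrite mem_undup mem_cat mem_nth.
  rewrite xU /e1 index_cat mem_nth // index_uniq // nth_cat -sz lti //.
- move=> z zx; rewrite /s; case zU: (z \in U) => //.
  have idx : size xs <= index z e1 by rewrite index_cat (negbTE zx) leq_addr.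
  have lt : index z e1 < size e2 by rewrite se2 -se1 index_mem me1.
  rewrite nth_cat -sz ltnNge idx /=.
  set w := nth x0 _ _.
  have : w \in [seq z <- U | z \notin ts].
    apply: mem_nth; move: lt; rewrite /e2 size_cat -sz.
    move: idx; set a := index z e1; set b := size xs; set c := size _. lia.
  rewrite mem_filter mem_undup mem_cat => /andP[/negbTE -> ]; rewrite orbF => ->.
  by [].
Qed.

Section Main.
Variables (n : nat) (T : finType) (B : {set {set T}}) (l : nat).

Definition code := ({ffun 'I_3 -> 'I_n} * {ffun 'I_3 -> T})%type.
Definition mkE (c : code) : {set 'I_n * T} := [set (c.1 k, c.2 k) | k : 'I_3].
Definition Om := [set f : {ffun 'I_n -> T} | injectiveb f].
Definition Aev (a : {set 'I_n * T}) := [set f in Om | [forall pr in a, f pr.1 == pr.2]].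
Definition conf (a b : {set 'I_n * T}) :=
  [exists pr in a, exists qr in b, (pr.1 == qr.1) != (pr.2 == qr.2)].
Definition Dist := [set t : {ffun 'I_3 -> T} | injectiveb t].

Lemma inAev_mkE (c : code) f :
  (f \in Aev (mkE c)) = (f \in Om) && [forall k, f (c.1 k) == c.2 k].
Proof.
rewrite inE; congr (_ && _); apply/forall_inP/forallP => H.
  by move=> k; apply: (H (c.1 k, c.2 k)); apply: imset_f.
by move=> pr /imsetP[k _ ->]; apply: H.
Qed.

Lemma LSlem (c : code) (S : {set {set 'I_n * T}}) : injective c.1 -> injective c.2 ->
  {in S, forall b, ~~ conf (mkE c) b} ->
  #|Dist| * #|Aev (mkE c) :&: GS Om Aev S| <= #|GS Om Aev S|.
Proof.
case: c => P X /= iP iX nc.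
set M := mkE (P, X); set G := GS Om Aev S.
pose key (f : {ffun 'I_n -> T}) := [ffun k => f (P k)].
have part : \sum_(t : {ffun 'I_3 -> T}) #|[set f in G | key f == t]| = #|G|.
  rewrite -sum1_card (partition_big key predT) //=.
  by apply: eq_bigr => t _; rewrite -sum1_card; apply: eq_bigl => f; rewrite inE.
have step : forall t, t \in Dist -> #|Aev M :&: G| <= #|[set f in G | key f == t]|.
  move=> t; rewrite inE => /injectiveP it.
  set xs := [seq X k | k <- enum 'I_3]; set ts := [seq t k | k <- enum 'I_3].
  have [s [sinj sX sfix]] : exists s : T -> T, [/\ injective s,
    forall i, i < size xs -> s (nth (X ord0) xs i) = nth (X ord0) ts i &
    forall z, z \notin xs -> s z \notin xs -> s z = z].
    by apply: ext_perm; rewrite ?map_inj_uniq ?size_map //; rewrite -enumT enum_uniq.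
  have sXk k : s (X k) = t k.
    have := sX k; rewrite size_map -?enumT size_enum_ord ltn_ord => /(_ isT).
    by rewrite !(nth_map ord0) -?enumT ?size_enum_ord ?ltn_ord // nth_ord_enum.
  pose g (f : {ffun 'I_n -> T}) := [ffun j => s (f j)].
  have ginj : {in Aev M :&: G &, injective g}.
    move=> f1 f2 _ _ eq; apply/ffunP => j; apply: sinj.
    by move/ffunP: eq => /(_ j); rewrite !ffunE.
  rewrite -(card_in_imset ginj); apply: subset_leq_card; apply/subsetP => h.
  case/imsetP => f; rewrite in_setI /M inAev_mkE => /andP[/andP[fOm /forallP fM] fG] ->.
  move: (fG); rewrite inGS => /andP[_ /forall_inP fN].
  have fi : injective f by move: fOm; rewrite inE => /injectiveP.
  have gOm : g f \in Om.
    rewrite inE; apply/injectiveP => j1 j2; rewrite !ffunE => /sinj; apply: fi.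
  rewrite inE; apply/andP; split; last first.
    apply/eqP/ffunP => k; rewrite !ffunE; move/eqP: (fM k) => ->; exact: sXk.
  rewrite inGS gOm /=; apply/forall_inP => N NS; apply/negP => gN.
  have := fN N NS; rewrite inE fOm /=; apply/negP/negPn/forall_inP => [[r cc]] rc /=.
  move: gN; rewrite inE => /andP[_ /forall_inP /(_ _ rc)]; rewrite ffunE /= => /eqP sfr.
  have ncN := nc N NS; rewrite /conf negb_exists_in in ncN.
  have nc2 k : (P k == r) = (X k == cc).
    have hk : (P k, X k) \in mkE (P, X) by apply: imset_f.
    move/forall_inP: ncN => /(_ _ hk) /=; rewrite negb_exists_in.
    move=> /forall_inP /(_ _ rc) /=.
    by case: (P k == r); case: (X k == cc).
  case: (boolP (f r \in xs)) => [/mapP[k _ fk] | nx].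
    have : P k == r by apply/eqP; apply: fi; rewrite fk; apply/eqP.
    by rewrite nc2 => /eqP <-; rewrite fk.
  case: (boolP (s (f r) \in xs)) => [/mapP[m _ sm] | nsx].
    have : X m == cc by rewrite -sfr sm.
    rewrite -nc2 => /eqP Pm; case/negP: nx; rewrite -Pm.
    by move/eqP: (fM m) => ->; apply: map_f; rewrite mem_enum.
  by rewrite -sfr (sfix _ nx nsx).
rewrite -part -sum_nat_const.
rewrite [X in _ <= X](bigID (fun t => t \in Dist)) /=.
apply: leq_trans (leq_addr _ _).
by apply: leq_sum => t tD; apply: step.
Qed.


Definition wp (i : 'I_n) (k : nat) : 'I_n := insubd i ((i + k) %% n).
Definition winpos (i : 'I_n) : {set 'I_n} := [set wp i k | k : 'I_l].
Definition nearp (p : 'I_n) : {set 'I_n} := [set wp p (n - l.-1 + j) | j : 'I_(l.*2.-1)].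

Lemma val_wp i k : val (wp i k) = (i + k) %% n.
Proof. by rewrite val_insubd ltn_pmod // (leq_ltn_trans (leq0n i) (ltn_ord i)). Qed.

Lemma near_win (hl : l.-1 <= n) i p q : p \in winpos i -> q \in winpos i -> q \in nearp p.
Proof.
case/imsetP => k1 _ ->; case/imsetP => k2 _ ->.
have lk1 := ltn_ord k1; have lk2 := ltn_ord k2.
have hj : k2 + l.-1 - k1 < l.*2.-1 by lia.
apply/imsetP; exists (Ordinal hj) => //; apply: val_inj; rewrite /= !val_wp modnDml.
have -> : i + k1 + (n - l.-1 + (k2 + l.-1 - k1)) = (i + k2) + n by lia.
by rewrite modnDr.
Qed.

Definition valid (c : code) := [&& injectiveb c.1, injectiveb c.2,
  [set c.2 k | k : 'I_3] \in B & [exists i, [forall k, c.1 k \in winpos i]]].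
Definition Ev := [set mkE c | c in [pred c : code | valid c]].

Definition rho (k j : 'I_3) : 'I_3 := if j == ord0 then k else if j == k then ord0 else j.
Lemma rhoK k : involutive (rho k).
Proof.
move=> j; rewrite /rho.
case: (j =P ord0) => [->|/eqP j0]; first by rewrite eqxx; case: (k =P ord0).
case: (j =P k) => [->|/eqP jk]; first by rewrite eqxx.
by rewrite (negbTE j0) (negbTE jk).
Qed.

Lemma imset_rho (U : finType) k (F : 'I_3 -> U) : [set F (rho k j) | j : 'I_3] = [set F j | j : 'I_3].
Proof.
apply/setP => y; apply/imsetP/imsetP => [[j _ ->]|[j _ ->]].
  by exists (rho k j).
by exists (rho k j) => //; rewrite rhoK.
Qed.

Lemma rot_valid c k : valid c -> exists c' : code,
  [/\ valid c', mkE c' = mkE c, c'.1 ord0 = c.1 k & c'.2 ord0 = c.2 k].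
Proof.
case: c => P X /and4P[/injectiveP iP /injectiveP iX XB /existsP[i /forallP Pw]].
have ri := can_inj (rhoK k).
exists ([ffun j => P (rho k j)], [ffun j => X (rho k j)]); split => /=.
- apply/and4P; split.
  + by apply/injectiveP => j1 j2; rewrite !ffunE => /iP /ri.
  + by apply/injectiveP => j1 j2; rewrite !ffunE => /iX /ri.
  + by rewrite (eq_imset _ (fun j => ffunE _ _)) /= (imset_rho k (fun j => X j)).
  + by apply/existsP; exists i; apply/forallP => j; rewrite ffunE.
- rewrite /mkE /= (eq_imset _ (fun j => (congr2 pair (ffunE _ _) (ffunE _ _)))) /=.
  exact: (imset_rho k (fun j => (P j, X j))).
- by rewrite ffunE /rho eqxx.
- by rewrite ffunE /rho eqxx.
Qed.

Definition i1 : 'I_3 := @Ordinal 3 1 isT.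
Definition i2 : 'I_3 := @Ordinal 3 2 isT.

Lemma ord3P (k : 'I_3) : [\/ k = ord0, k = i1 | k = i2].
Proof.
case: k => [[|[|[|m]]] Hk].
- by constructor 1; apply: val_inj.
- by constructor 2; apply: val_inj.
- by constructor 3; apply: val_inj.
- by [].
Qed.

Hypothesis PS : is_PSTS B.

Lemma third_uniq (c1 c2 : code) : valid c1 -> valid c2 ->
  c1.2 ord0 = c2.2 ord0 -> c1.2 i1 = c2.2 i1 -> c1.2 i2 = c2.2 i2.
Proof.
case: c1 => P1 X1; case: c2 => P2 X2 /=.
move=> /and4P[_ /injectiveP iX1 X1B _] /and4P[_ /injectiveP iX2 X2B _] e0 e1.
set b1 := [set X1 k | k : 'I_3] in X1B; set b2 := [set X2 k | k : 'I_3] in X2B.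
have x01 : X1 ord0 != X1 i1 by apply/eqP => /iX1.
have eb : b1 = b2.
  case: PS => _ /(_ _ _ x01) /card_le1_eqP H.
  apply: H; rewrite !inE ?X1B ?X2B /=.
  + by rewrite /b2 e0 e1 !imset_f.
  + by rewrite /b1 !imset_f.
have : X1 i2 \in b2 by rewrite -eb /b1 imset_f.
case/imsetP => k _; case: (ord3P k) => ->.
- by rewrite -e0 => /iX1.
- by rewrite -e1 => /iX1.
- by [].
Qed.

Lemma count_events (Sb : {set {set 'I_n * T}}) (R : pred code) (U : finType)
    (h : code -> U) (W : {set U}) :
  (forall b, b \in Sb -> exists c, [/\ valid c, R c & mkE c = b]) ->
  (forall c1 c2, valid c1 -> valid c2 -> R c1 -> R c2 -> h c1 = h c2 -> c1 = c2) ->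
  (forall c, valid c -> R c -> h c \in W) ->
  #|Sb| <= #|W|.
Proof.
move=> ex hinj hW.
pose hh b := omap h [pick c | valid c && R c && (mkE c == b)].
have pk b : b \in Sb -> exists c, [/\ valid c, R c, mkE c = b &
    [pick c | valid c && R c && (mkE c == b)] = Some c].
  move=> bS; case: pickP => [c /andP[/andP[vc rc] /eqP ec]|H].
    by exists c.
  by case: (ex b bS) => c [vc rc ec]; move: (H c); rewrite vc rc ec eqxx.
have inj : {in Sb &, injective hh}.
  move=> b1 b2 /pk[c1 [v1 r1 e1 p1]] /pk[c2 [v2 r2 e2 p2]].
  rewrite /hh p1 p2 /= => [[]] /(hinj _ _ v1 v2 r1 r2) ec.
  by rewrite -e1 -e2 ec.
rewrite -(card_in_imset inj).
apply: leq_trans (_ : #|Some @: W| <= _); last by rewrite card_imset //; exact: Some_inj.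
apply: subset_leq_card; apply/subsetP => o /imsetP[b bS ->].
case: (pk b bS) => c [vc rc _ pc]; rewrite /hh pc /=.
by apply: imset_f; apply: hW.
Qed.

Hypothesis Tn : #|T| = n.
Hypothesis hl : l.-1 <= n.

Lemma code_eq (c1 c2 : code) : c1.1 ord0 = c2.1 ord0 -> c1.1 i1 = c2.1 i1 -> c1.1 i2 = c2.1 i2 ->
  c1.2 ord0 = c2.2 ord0 -> c1.2 i1 = c2.2 i1 -> c1.2 i2 = c2.2 i2 -> c1 = c2.
Proof.
case: c1 c2 => P1 X1 [P2 X2] /= p0 p1 p2 x0 x1 x2.
by congr pair; apply/ffunP => k; case: (ord3P k) => ->.
Qed.

Lemma ev_code b : b \in Ev -> exists c, valid c /\ mkE c = b.
Proof. by case/imsetP => c vc ->; exists c. Qed.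

Lemma win_near (c : code) : valid c ->
  c.1 i1 \in nearp (c.1 ord0) /\ c.1 i2 \in nearp (c.1 ord0).
Proof.
case/and4P => _ _ _ /existsP[i /forallP Pw].
by split; apply: (near_win hl (Pw ord0)); apply: Pw.
Qed.

Lemma cardNx x : #|[set b in Ev | [exists q, (q, x) \in b]]| <= n * n * (l.*2.-1 * l.*2.-1).
Proof.
set m := l.*2.-1.
pose wf (w : T * 'I_n * 'I_m * 'I_m) : T * 'I_n * 'I_n * 'I_n :=
  let: (y, p, j1, j2) := w in (y, p, wp p (n - l.-1 + j1), wp p (n - l.-1 + j2)).
apply: leq_trans (@count_events _ (fun c => c.2 ord0 == x) _
   (fun c => (c.2 i1, c.1 ord0, c.1 i1, c.1 i2)) [set wf w | w : T * 'I_n * 'I_m * 'I_m] _ _ _) _.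
- move=> b; rewrite inE => /andP[/ev_code[c [vc ec]] /existsP[q]].
  rewrite -ec => /imsetP[k _ [_ ->]].
  by case: (rot_valid k vc) => c' [vc' ec' _ e2]; exists c'; rewrite ec' e2 eqxx.
- move=> c1 c2 v1 v2 /eqP r1 /eqP r2 [e1 e2 e3 e4].
  have x0 : c1.2 ord0 = c2.2 ord0 by rewrite r1 r2.
  by apply: code_eq => //; apply: third_uniq.
- move=> c vc _; case: (win_near vc) => /imsetP[j1 _ ->] /imsetP[j2 _ ->].
  by apply/imsetP; exists (c.2 i1, c.1 ord0, j1, j2).
- apply: leq_trans (leq_imset_card _ _) _.
  by rewrite !card_prod !card_ord Tn mulnA.
Qed.

Lemma cardNp q : #|[set b in Ev | [exists y, (q, y) \in b]]| <= n * n * (l.*2.-1 * l.*2.-1).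
Proof.
set m := l.*2.-1.
pose wf (w : T * T * 'I_m * 'I_m) : T * T * 'I_n * 'I_n :=
  let: (x, y, j1, j2) := w in (x, y, wp q (n - l.-1 + j1), wp q (n - l.-1 + j2)).
apply: leq_trans (@count_events _ (fun c => c.1 ord0 == q) _
   (fun c => (c.2 ord0, c.2 i1, c.1 i1, c.1 i2)) [set wf w | w : T * T * 'I_m * 'I_m] _ _ _) _.
- move=> b; rewrite inE => /andP[/ev_code[c [vc ec]] /existsP[y]].
  rewrite -ec => /imsetP[k _ [-> _]].
  by case: (rot_valid k vc) => c' [vc' ec' e1 _]; exists c'; rewrite ec' e1 eqxx.
- move=> c1 c2 v1 v2 /eqP r1 /eqP r2 [e1 e2 e3 e4].
  have p0 : c1.1 ord0 = c2.1 ord0 by rewrite r1 r2.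
  by apply: code_eq => //; apply: third_uniq.
- move=> c vc /eqP r; case: (win_near vc); rewrite r => /imsetP[j1 _ ->] /imsetP[j2 _ ->].
  by apply/imsetP; exists (c.2 ord0, c.2 i1, j1, j2).
- apply: leq_trans (leq_imset_card _ _) _.
  by rewrite !card_prod !card_ord Tn mulnA.
Qed.

Lemma degree a : a \in Ev -> #|[set b in Ev | conf a b]| <= 6 * (n * n * (l.*2.-1 * l.*2.-1)).
Proof.
case/ev_code => c [vc <-].
set N := n * n * _.
set NP := fun q => [set b in Ev | [exists y, (q, y) \in b]].
set NX := fun x => [set b in Ev | [exists q, (q, x) \in b]].
have sub : [set b in Ev | conf (mkE c) b] \subset
    \bigcup_(k in [set: 'I_3]) (NP (c.1 k) :|: NX (c.2 k)).
  apply/subsetP => b; rewrite inE => /andP[bE /exists_inP[[p x] /imsetP[k _ [-> ->]]]].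
  case/exists_inP => [[r y]] rb /= ne.
  apply/bigcupP; exists k; rewrite ?inE //.
  case: (boolP (c.1 k == r)) => [/eqP e | ne1].
    by rewrite bE /=; apply/orP; left; apply/existsP; exists y; rewrite e.
  move: ne; rewrite (negbTE ne1); case: (c.2 k =P y) => // e _.
  by rewrite bE /= orbC; apply/orP; left; apply/existsP; exists r; rewrite e.
apply: leq_trans (subset_leq_card sub) _.
apply: leq_trans (card_bigcup_le _ _) _.
apply: leq_trans (_ : \sum_(k in [set: 'I_3]) (N + N) <= _).
  apply: leq_sum => k _; apply: leq_trans (leq_card_setU _ _) _.
  by apply: leq_add; [apply: cardNp | apply: cardNx].
by rewrite sum_nat_const cardsT card_ord; lia.
Qed.

Lemma card_Dist : #|Dist| = n * (n.-1 * n.-2).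
Proof. by rewrite card_inj_ffuns card_ord Tn !ffactnS ffactn0 muln1. Qed.

Lemma exists_good (n3 : 3 <= n)
  (Kd : 4 * (6 * (n * n * (l.*2.-1 * l.*2.-1))) <= #|Dist|) :
  exists f, f \in GS Om Aev Ev.
Proof.
have LSh : forall a (S : {set {set 'I_n * T}}), a \in Ev -> S \subset Ev ->
    {in S, forall b, ~~ conf a b} -> #|Dist| * #|Aev a :&: GS Om Aev S| <= #|GS Om Aev S|.
  move=> a S /ev_code[c [vc <-]] _ nc.
  by case/and4P: vc => /injectiveP i1 /injectiveP i2 _ _; apply: LSlem.
have Om0 : 0 < #|Om|.
  apply/card_gt0P; exists [ffun i => enum_val (cast_ord (esym Tn) i)].
  rewrite inE; apply/injectiveP => i j; rewrite !ffunE => /enum_val_inj /cast_ord_inj //.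
have K2 : 2 < #|Dist|.
  rewrite card_Dist; have h1 : 2 <= n.-1 by lia.
  have h2 : 1 <= n.-2 by lia.
  by rewrite (leq_trans _ (leq_mul n3 (leq_mul h1 h2))).

have := @GSpos _ _ Om Aev conf Ev #|Dist| _ LSh degree Kd Om0 K2 Ev (subxx _).
by case/card_gt0P => f fG; exists f.
Qed.

End Main.

Lemma lin_arith (C D y z w v : nat) : C = 100 * 100 * 100 * 100 -> D = 908 * 908 ->
  v <= 4 * w -> C * w <= D * z -> 15 * y <= z -> 4 * (6 * v) <= z - 3 * y.
Proof. move=> -> ->; lia. Qed.

Lemma arith (C D l n : nat) : C = 100 * 100 * 100 * 100 -> D = 908 * 908 ->
  C * (l * l) <= D * n -> 3 <= l ->
  [/\ 3 <= n, l.-1 <= n & 4 * (6 * (n * n * (l.*2.-1 * l.*2.-1))) <= n * (n.-1 * n.-2)].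
Proof. move=> hC hD H h3.
have hl9 : 9 <= l * l by apply: (leq_mul h3 h3).
have hll : l <= l * l by rewrite leq_pmulr //; lia.
move: H hl9 hll; set x := l * l => H hl9 hll.
have hn : 1092 <= n by lia.
have hm : l.*2.-1 * l.*2.-1 <= 4 * x.
  have h1 : l.*2.-1 <= l.*2 by apply: leq_pred.
  apply: leq_trans (leq_mul h1 h1) _; rewrite -!muln2; lia.
split; [lia|lia|].
set m := _ * _ in hm.
have e1 : (n * n) * n - 3 * (n * n) <= n * (n.-1 * n.-2).
  have hk : forall k, 3 <= k -> k.-1 * k.-2 = k * k - 3 * k + 2.
    by case=> [|[|[|k]]] //= _; rewrite !mulSn !mulnS; lia.
  rewrite hk; last lia.
  rewrite mulnDr mulnBr mulnA; lia.
apply: leq_trans e1; apply: (@lin_arith C D _ _ (n * n * x) _ hC hD).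
- by rewrite [4 * _]mulnCA leq_mul2l hm orbT.
- by rewrite [C * _]mulnCA [D * _]mulnCA leq_mul2l H orbT.
- by rewrite mulnC leq_mul2l; apply/orP; right; lia.
Qed.

Section RealPart.
Local Open Scope R_scope.
Lemma real_to_nat (l n : nat) :
  Rle (INR l) (Rmult (Rdiv (INR 908) (INR 10000)) (sqrt (INR n))) ->
  (100 * 100 * 100 * 100 * (l * l) <= 908 * 908 * n)%N.
Proof.
intro H.
have Hl0 : 0 <= INR l by apply: pos_INR.
have Hn0 : 0 <= INR n by apply: pos_INR.
rewrite (INR_IZR_INZ 908) (INR_IZR_INZ 10000) in H; simpl in H.
have Hs : sqrt (INR n) * sqrt (INR n) = INR n by apply: sqrt_sqrt.
have s0 : 0 <= sqrt (INR n) by apply: sqrt_pos.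
have H2 : INR l * INR l <= (908 / 10000 * sqrt (INR n)) * (908 / 10000 * sqrt (INR n)).
  by apply: Rmult_le_compat.
have H3 : 100000000 * (INR l * INR l) <= 824464 * INR n.
  rewrite -Hs; lra.
apply/leP; apply: INR_le.
rewrite -!multE !mult_INR !(INR_IZR_INZ 100) !(INR_IZR_INZ 908); simpl.
lra.
Qed.
End RealPart.

Theorem corollary3 (T : finType) (B : {set {set T}}) (n l : nat) :
  #|T| = n -> 3 <= n -> is_PSTS B ->
  0 < l -> Rle (INR l) (Rmult (Rdiv (INR 908) (INR 10000)) (sqrt (INR n))) ->
  exists phi : 'I_n -> T, bijective phi /\ cyc_good B phi l.
Proof.
move=> Tn n3 PS l0 Hl.
case: (leqP l 2) => hl2.
  pose phi (i : 'I_n) := enum_val (cast_ord (esym Tn) i).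
  exists phi; split.
    apply: inj_card_bij; last by rewrite card_ord Tn.
    by move=> i j /enum_val_inj /cast_ord_inj.
  move=> i b bB; apply/negP => sub.
  have := subset_leq_card sub; rewrite (PS.1 b bB).
  move=> h; have := leq_trans h (leq_imset_card _ _); rewrite card_ord; lia.
have H := real_to_nat Hl.
case: (arith erefl erefl H hl2) => _ hl Kd.
have Kd' : 4 * (6 * (n * n * (l.*2.-1 * l.*2.-1))) <= #|Dist T|.
  by rewrite (card_Dist Tn).
have [f fG] := exists_good PS Tn hl n3 Kd'.
move: (fG); rewrite inGS => /andP[fOm /forall_inP fN].
have fi : injective f by move: fOm; rewrite inE => /injectiveP.
pose phi (i : 'I_n) := f i.
have bij : bijective phi by apply: inj_card_bij; [exact: fi | rewrite card_ord Tn].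
exists phi; split => //.
case: bij => g phiK gK.
move=> i b bB; apply/negP => sub.
have b3 := PS.1 b bB.
have sz : size (enum b) = 3 by rewrite -cardE.
pose X : {ffun 'I_3 -> T} := [ffun k : 'I_3 => nth (f i) (enum b) k].
have iX : injective X.
  move=> k1 k2; rewrite !ffunE => /eqP; rewrite nth_uniq ?sz ?ltn_ord ?enum_uniq //.
  by move/eqP/val_inj.
have Xb : [set X k | k : 'I_3] = b.
  apply/setP => y; apply/imsetP/idP => [[k _ ->]|yb].
    by rewrite ffunE -mem_enum mem_nth // sz ltn_ord.
  have hy : index y (enum b) < 3 by rewrite -sz index_mem mem_enum.
  by exists (Ordinal hy) => //; rewrite ffunE /= nth_index // mem_enum.
pose P : {ffun 'I_3 -> 'I_n} := [ffun k : 'I_3 => g (X k)].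
have PX k : P k = g (X k) by rewrite /P ffunE.
have vc : valid B l (P, X).
  apply/and4P; split => /=.
  - apply/injectiveP => k1 k2; by rewrite !PX => /(can_inj gK) /iX.
  - exact/injectiveP.
  - by rewrite Xb.
  - apply/existsP; exists i; apply/forallP => k; rewrite PX.
    have : X k \in b by rewrite -Xb imset_f.
    move/(subsetP sub) => /imsetP[k' _ ->].
    rewrite phiK; exact: imset_f.
have aE : mkE (P, X) \in Ev n B l by apply/imsetP; exists (P, X).
have := fN _ aE; rewrite inAev_mkE fOm /=; apply/negP/negPn/forallP => k /=.
by rewrite PX; apply/eqP; apply: gK.
Qed.
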